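(* The set of finite factors of $\mathbf{t}_{3/2}$ is closed under bit-wise complement (if $u$ is a factor then so is $\bar u$), and so is the set of finite factors of $\mathbf{t}'$. Consequently, $\mathsf{p}_{\mathbf{t}_{3/2}}(n+1)=2\,\mathsf{p}_{\Delta(\mathbf{t}_{3/2})}(n)$ for all $n\ge 0$.
   Context: Base-$3/2$ expansions: $\langle 0\rangle_{3/2}$ is the empty word, and for $n\ge 1$, writing $2n=3m+d$ with integers $m\ge0$, $d\in\{0,1,2\}$, set $\langle n\rangle_{3/2}=\langle m\rangle_{3/2}\,d$. The Thue--Morse word in base $3/2$ is $\mathbf{t}_{3/2}=(t_n)_{n\ge0}\in\{0,1\}^{\mathbb{N}}$ where $t_n$ is the digit sum of $\langle n\rangle_{3/2}$ modulo $2$; equivalently the unique binary sequence with $t_0=0$, $t_{3n}=t_{3n+1}=t_{2n}$, $t_{3n+2}=1-t_{2n+1}$. Dekking's word $\mathbf{t}'=(x_n)_{n\ge0}$ is the unique binary infinite word with $x_0=0$ such that $\mathbf{t}'=\beta(x_0x_1)\beta(x_2x_3)\cdots$ where $\beta(00)=\beta(01)=010$, $\beta(10)=\beta(11)=101$. The bit-wise complement $\bar u$ of a binary word $u$ is obtained by exchanging $0$ and $1$. For an infinite binary word $\mathbf{x}=(x_n)$, $\Delta(\mathbf{x})=(x_{n+1}-x_n \bmod 2)_{n\ge0}$ is its first difference sequence, and $\mathsf{p}_{\mathbf{x}}(n)$ denotes the number of distinct factors of length $n$ of $\mathbf{x}$. *)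

(* Defs.v *)
From mathcomp Require Import all_boot.
From mathcomp Require Import boolp.
Set Implicit Arguments. Unset Strict Implicit. Unset Printing Implicit Defensive.

(* Infinite binary words are functions nat -> bool (false = 0, true = 1). *)
Definition word := nat -> bool.

(* Base-3/2 expansion <n>_{3/2}, most significant digit first.
   For n >= 1, 2n = 3m + d with d in {0,1,2}; <n> = <m> d.
   Computed with fuel (fuel n suffices since m < n for n >= 1). *)
Fixpoint b32_aux (fuel n : nat) : seq nat :=
  match fuel with
  | 0 => [::]
  | fuel'.+1 =>
      if n == 0 then [::] else rcons (b32_aux fuel' ((2 * n) %/ 3)) ((2 * n) %% 3)
  end.
Definition base32 (n : nat) : seq nat := b32_aux n n.

Definition t32 : word := fun n => odd (sumn (base32 n)).

Definition beta (a b : bool) : seq bool :=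
  if a then [:: true; false; true] else [:: false; true; false].

Definition is_dekking (x : word) : Prop :=
  x 0 = false /\
  forall k j, j < 3 -> x (3 * k + j) = nth false (beta (x (2 * k)) (x (2 * k).+1)) j.

Definition factor (x : word) (u : seq bool) : Prop :=
  exists i, u = mkseq (fun j => x (i + j)) (size u).

Definition compl (u : seq bool) : seq bool := map negb u.

Definition Delta (x : word) : word := fun n => x n.+1 (+) x n.

Definition complexity (x : word) (n : nat) : nat :=
  #|[set u : n.-tuple bool | `[< factor x u >]]|.

(* Main.v *)
Require Import Defs.
From mathcomp Require Import all_boot.
From mathcomp Require Import boolp.
From mathcomp Require Import zify.
Set Implicit Arguments. Unset Strict Implicit.

Fixpoint Ssum (D : nat -> bool) (M : nat -> nat) (k n : nat) : bool :=
  match k with 0 => false | k'.+1 => D n (+) Ssum D M k' (M n) end.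

Lemma factorP (x : word) (u : seq bool) :
  factor x u <-> exists i, forall k, k < size u -> nth false u k = x (i + k).
Proof.
split.
- move=> [i Hi]; exists i => k Hk; rewrite Hi nth_mkseq //.
- move=> [i Hi]; exists i; apply: (@eq_from_nth _ false); first by rewrite size_mkseq.
  by move=> k Hk; rewrite nth_mkseq // Hi.
Qed.

Lemma iter_le0 (M : nat -> nat) (HM0 : M 0 = 0) (Hlt : forall n, 0 < n -> M n < n) :
  forall k n, n <= k -> iter k M n = 0.
Proof.
elim=> [|k IH] n Hn; first by case: n Hn.
rewrite iterSr; apply: IH.
case: n Hn => [|n] Hn; first by rewrite HM0.
by have := Hlt n.+1 isT; lia.
Qed.

Lemma lemA (w : word) (M : nat -> nat) (D : nat -> bool)
  (HM : forall n j, M (n + 3 * j) = M n + 2 * j)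
  (HD : forall n j, D (n + 3 * j) = D n)
  (Hw : forall n, w n = D n (+) w (M n)) :
  forall k n j, w (n + 3 ^ k * j) = Ssum D M k n (+) w (iter k M n + 2 ^ k * j).
Proof.
elim=> [|k IH] n j; first by rewrite !mul1n.
have -> : n + 3 ^ k.+1 * j = n + 3 * (3 ^ k * j) by rewrite expnS mulnA.
rewrite Hw HM HD.
have -> : M n + 2 * (3 ^ k * j) = M n + 3 ^ k * (2 * j) by rewrite mulnCA.
rewrite IH iterSr /= addbA expnS.
by rewrite mulnCA mulnA.
Qed.

Lemma crt (a b r : nat) : exists J, 2 ^ a %| r + 3 ^ b * J.
Proof.
elim: a => [|a [J HJ]]; first by exists 0; rewrite dvd1n.
case/dvdnP: HJ => c Hc.
case Hodd: (odd c).
- exists (J + 2 ^ a).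
  have -> : r + 3 ^ b * (J + 2 ^ a) = 2 ^ a * (c + 3 ^ b).
    by rewrite mulnDr addnA Hc mulnDr mulnC [3 ^ b * _]mulnC.
  rewrite expnS [2 * 2 ^ a]mulnC dvdn_pmul2l; last by rewrite expn_gt0.
  by rewrite dvdn2 oddD oddX Hodd /= orbT.
- exists J; rewrite Hc expnS dvdn_pmul2r; last by rewrite expn_gt0.
  by rewrite dvdn2 Hodd.
Qed.

Lemma Ssum0 (D : nat -> bool) (M : nat -> nat) (HM0 : M 0 = 0) (D0 : D 0 = false) k :
  Ssum D M k 0 = false.
Proof. by elim: k => //= k IH; rewrite HM0 IH D0. Qed.

Lemma iter0 (M : nat -> nat) (HM0 : M 0 = 0) k : iter k M 0 = 0.
Proof. by elim: k => //= k ->. Qed.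

Lemma Ssum_add (D : nat -> bool) (M : nat -> nat) k b n :
  Ssum D M (k + b) n = Ssum D M b n (+) Ssum D M k (iter b M n).
Proof.
elim: b n => [|b IH] n; first by rewrite addn0.
by rewrite addnS iterSr /= IH addbA.
Qed.

Lemma generic_compl (w : word) (M : nat -> nat) (D : nat -> bool)
  (HM : forall n j, M (n + 3 * j) = M n + 2 * j)
  (HD : forall n j, D (n + 3 * j) = D n)
  (Hw : forall n, w n = D n (+) w (M n))
  (HM0 : M 0 = 0) (D0 : D 0 = false) (w0 : w 0 = false)
  (Hlt : forall n, 0 < n -> M n < n)
  (r : nat) (Hr1 : M (M r) = 0) (Hr2 : D r (+) D (M r) = true) :
  forall u, factor w u -> factor w (compl u).
Proof.
have A := @lemA w M D HM HD Hw.
have B : forall K, exists j, w (2 ^ K * j) = true.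
  move=> K; have [J HJ] := crt (K + 2) (K + 2) r.
  case HwJ: (w (2 ^ (K + 2) * J)).
    by exists (4 * J); rewrite -HwJ expnD mulnA [4]lock /= -lock.
  case/dvdnP: HJ => q Hq.
  exists (4 * q).
  have := A (K + 2) r J.
  rewrite Ssum_add iterD /= Hr1 iter0 // add0n HwJ Hq Ssum0 // !addbF Hr2 => <-.
  by congr w; rewrite expnD; lia.
move=> u /factorP [i Hi].
have [j Hj] := B (i + size u).
apply/factorP; exists (i + 3 ^ (i + size u) * j) => k Hk.
rewrite size_map in Hk.
rewrite (nth_map false) // Hi // -addnA [3 ^ _ * _ + k]addnC addnA A.
have := A (i + size u) (i + k) 0.
rewrite muln0 !addn0 => ->.
rewrite iter_le0 //; last by lia.
by rewrite !add0n muln0 Hj w0 addbT addbF.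
Qed.
Lemma b32_fuel : forall f g n, n <= f -> n <= g -> b32_aux f n = b32_aux g n.
Proof.
elim=> [|f IH] [|g] n Hf Hg //=.
- by case: n Hf Hg.
- by case: n Hf Hg.
- case: eqP => // Hn; congr rcons; apply: IH; lia.
Qed.

Lemma t32_rec n : t32 n = odd ((2 * n) %% 3) (+) t32 ((2 * n) %/ 3).
Proof.
case: n => [|n]; first by [].
rewrite /t32 /base32 /= sumn_rcons oddD addbC; congr (_ (+) _).
congr (odd (sumn _)); apply: b32_fuel; lia.
Qed.

Lemma t32_0 : t32 0 = false. Proof. by []. Qed.

Lemma dek_rec x : is_dekking x -> forall n, x n = (n %% 3 == 1) (+) x (2 * (n %/ 3)).
Proof.
move=> [_ H] n.
rewrite {1}(divn_eq n 3) [_ * 3]mulnC H ?ltn_mod //.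
case: (x (2 * (n %/ 3))); case: (n %% 3) (ltn_mod n 3) => [|[|[|]]] //.
Qed.
Definition Dseq (u : seq bool) : seq bool :=
  mkseq (fun i => nth false u i.+1 (+) nth false u i) (size u).-1.

Lemma Dseq_size n (u : n.+1.-tuple bool) : size (Dseq u) == n.
Proof. by rewrite size_mkseq size_tuple. Qed.

Definition dtup n (u : n.+1.-tuple bool) : n.-tuple bool := Tuple (Dseq_size u).

Lemma nth_dtup n (u : n.+1.-tuple bool) k : k < n ->
  nth false (dtup u) k = nth false u k.+1 (+) nth false u k.
Proof. by move=> Hk; rewrite /= nth_mkseq // size_tuple. Qed.

Lemma nth_ct n (u : n.-tuple bool) k : k < n ->
  nth false (map_tuple negb u) k = ~~ nth false u k.
Proof. by move=> Hk; rewrite /= (nth_map false) // size_tuple. Qed.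

Lemma complexity_gen (x : word)
  (Hc : forall u, factor x u -> factor x (compl u)) n :
  complexity x n.+1 = 2 * complexity (Delta x) n.
Proof.
have HcE : forall u, factor x (compl u) = factor x u.
  move=> u; apply: propext; split; last exact: Hc.
  by move=> /Hc; rewrite /compl (mapK negbK).
rewrite /complexity.
set F := [set u : n.+1.-tuple bool | `[< factor x u >]].
set B := [set u : n.+1.-tuple bool | ~~ nth false u 0].
rewrite -(cardsID B F).
have E1 : #|F :\: B| = #|F :&: B|.
  rewrite -(card_imset (F :&: B) (f := fun u : n.+1.-tuple bool => map_tuple negb u)); last first.
    by move=> u v /(congr1 val) /= /(inj_map negb_inj) /val_inj.
  rewrite (can_imset_pre _ (g := fun u : n.+1.-tuple bool => map_tuple negb u)); last first.
    by move=> u; apply: val_inj; rewrite /= (mapK negbK).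
  apply: eq_card => u; rewrite !inE /= (nth_map false) ?size_tuple //.
  by rewrite -/(compl (tval u)) HcE negbK andbC.
have E2 : #|[set v : n.-tuple bool | `[< factor (Delta x) v >]]| = #|F :&: B|.
  rewrite -(card_in_imset (f := @dtup n)).
    apply: eq_card => v; rewrite inE; apply/asboolP/imsetP.
    + move=> /factorP [i Hi].
      have Hs : size (mkseq (fun j => x (i + j)) n.+1) == n.+1 by rewrite size_mkseq.
      set u0 := Tuple Hs.
      have Hu0 : factor x u0 by exists i; rewrite size_tuple.
      have Hd : dtup u0 = v.
        apply: val_inj; apply: (@eq_from_nth _ false); first by rewrite !size_tuple.
        move=> k; rewrite size_tuple => Hk; rewrite nth_dtup // Hi ?size_tuple //.
        change (tval u0) with (mkseq (fun j => x (i + j)) n.+1).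
        by rewrite !nth_mkseq // ?addnS //; lia.
      case Hh: (nth false u0 0).
      * exists (map_tuple negb u0).
          by rewrite !inE nth_ct // Hh andbT; apply/asboolP; exact: (Hc _ Hu0).
        rewrite -Hd; apply: val_inj; apply: (@eq_from_nth _ false); first by rewrite !size_tuple.
        move=> k; rewrite size_tuple => Hk; have Hk1 : k < n.+1 by lia.
        rewrite !nth_dtup // !nth_ct //.
        by case: (nth false u0 k.+1); case: (nth false u0 k).
      * exists u0; last by rewrite Hd.
        by rewrite !inE Hh andbT; apply/asboolP.
    + move=> [u]; rewrite !inE => /andP [/asboolP /factorP [i Hi] _] ->.
      apply/factorP; exists i => k; rewrite size_tuple => Hk.
      rewrite nth_dtup // !Hi ?size_tuple //; last by lia. by rewrite /Delta -addnS.
  move=> u v; rewrite !inE => /andP [_ Hu] /andP [_ Hv] Huv.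
  have H : forall k, k <= n -> nth false u k = nth false v k.
    elim=> [|k IH] Hk; first by rewrite (negbTE Hu) (negbTE Hv).
    have := nth_dtup u Hk; rewrite Huv nth_dtup // IH; last by lia.
    by move=> /(congr1 (addb^~ (nth false v k))); rewrite !addbK.
  apply: val_inj; apply: (@eq_from_nth _ false); first by rewrite !size_tuple.
  by move=> k; rewrite size_tuple => Hk; apply: H.
rewrite E1 E2; lia.
Qed.

Theorem proposition15 :
  (forall u : seq bool, factor t32 u -> factor t32 (compl u)) /\
  (forall x : word, is_dekking x ->
     forall u : seq bool, factor x u -> factor x (compl u)) /\
  (forall n : nat, complexity t32 n.+1 = 2 * complexity (Delta t32) n).
Proof.
have P1 : forall u : seq bool, factor t32 u -> factor t32 (compl u).
  apply: (@generic_compl t32 (fun n => (2 * n) %/ 3) (fun n => odd ((2 * n) %% 3))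
            _ _ t32_rec _ _ _ _ 2) => //.
  - move=> n j; lia.
  - move=> n j; congr odd; lia.
  - move=> n; lia.
split; first exact: P1.
split; last by move=> n; apply: complexity_gen; exact: P1.
move=> x Hx.
apply: (@generic_compl x (fun n => 2 * (n %/ 3)) (fun n => n %% 3 == 1)
          _ _ (dek_rec Hx) _ _ _ _ 1) => //.
- move=> n j; lia.
- move=> n j; congr (_ == _); lia.
- by case: Hx.
- move=> n; lia.
Qed.
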